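(* Let $\alpha,\beta,\gamma,\varepsilon>0$, $0<\mu<1$, $\eta>1$, $\eta_D>1$, and consider the system of ODEs for $x=(V,S,D)$: \[ \dot V=\alpha(1-\mu)V\,\Omega(x)-\varepsilon V,\qquad \dot S=\beta VS\,\theta(x)-\varepsilon S,\qquad \dot D=(\alpha\mu+\gamma D)V\,\theta(x)-\varepsilon D, \] where $\Omega(x)=1-V-\eta S-\eta_D D$ and $\theta(x)=1-V-S-D$. Set $\sigma=1-\frac{\varepsilon}{\alpha(1-\mu)}$ and assume $\mu<1-\frac{\varepsilon}{\alpha}$ (equivalently $\sigma>0$). Let $\mathcal U=\{(V,S,D): V,S,D\ge0,\ V+S+D\le1\}$. Then a point $Q=(V_2,S_2,D_2)$ with $V_2,S_2,D_2>0$ is an equilibrium point of the system if and only if $Q\in\mathcal U$ and the following hold: (i) $D_2=\dfrac{\alpha\mu}{\beta-\gamma}$, which necessarily requires $\beta>\gamma$; moreover necessarily $D_2<\sigma/\eta_D$; (ii) $0<V_2<\sigma$ is a root of $V^2+MV+m=0$, where \[ M=\frac{\sigma-(\eta_D-\eta)D_2-\eta}{\eta-1},\qquad m=\frac{\eta\varepsilon}{\beta(\eta-1)}>0, \] i.e. $V_2=V_2^{\pm}=\frac{-M\pm\sqrt{M^2-4m}}{2}$, provided $M^2-4m\ge0$; (iii) $0<S_2<1$ is given by $S_2=1-V_2-D_2-\dfrac{\varepsilon}{\beta V_2}$.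
   Context: $V$, $S$, $D$ are the normalised concentrations of a helper virus, a satellite RNA, and defective interfering RNAs respectively; a point $Q$ with all three components positive is called a coexistence equilibrium. An equilibrium point is a zero of the right-hand side of the system. *)

(* Defs.v *)
From Stdlib Require Import Reals.
Open Scope R_scope.

Definition Omega (eta etaD V S D : R) : R := 1 - V - eta * S - etaD * D.
Definition theta (V S D : R) : R := 1 - V - S - D.

Definition fV (alpha mu eps eta etaD V S D : R) : R :=
  alpha * (1 - mu) * V * Omega eta etaD V S D - eps * V.
Definition fS (beta eps V S D : R) : R :=
  beta * V * S * theta V S D - eps * S.
Definition fD (alpha mu gamma eps V S D : R) : R :=
  (alpha * mu + gamma * D) * V * theta V S D - eps * D.

Definition is_equilibrium (alpha beta gamma eps mu eta etaD V S D : R) : Prop :=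
  fV alpha mu eps eta etaD V S D = 0 /\
  fS beta eps V S D = 0 /\
  fD alpha mu gamma eps V S D = 0.

Definition in_U (V S D : R) : Prop :=
  0 <= V /\ 0 <= S /\ 0 <= D /\ V + S + D <= 1.

Definition sigmaVSD (alpha mu eps : R) : R := 1 - eps / (alpha * (1 - mu)).

Definition Mcoef (alpha mu eps eta etaD D2 : R) : R :=
  (sigmaVSD alpha mu eps - (etaD - eta) * D2 - eta) / (eta - 1).

Definition mcoef (beta eps eta : R) : R := eta * eps / (beta * (eta - 1)).

(* Main.v *)
Require Import Defs.
From Stdlib Require Import Reals Lra Psatz.
Open Scope R_scope.

Lemma sqrt_sq_abs (x : R) : sqrt (x ^ 2) = Rabs x.
Proof. rewrite <- sqrt_Rsqr_abs. unfold Rsqr. f_equal. ring. Qed.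

Theorem proposition2
  (alpha beta gamma eps mu eta etaD : R)
  (Halpha : 0 < alpha) (Hbeta : 0 < beta) (Hgamma : 0 < gamma) (Heps : 0 < eps)
  (Hmu0 : 0 < mu) (Hmu1 : mu < 1) (Heta : 1 < eta) (HetaD : 1 < etaD)
  (Hmu : mu < 1 - eps / alpha)
  (V2 S2 D2 : R) (HV2 : 0 < V2) (HS2 : 0 < S2) (HD2 : 0 < D2) :
  let sg := sigmaVSD alpha mu eps in
  let M := Mcoef alpha mu eps eta etaD D2 in
  let m := mcoef beta eps eta in
  is_equilibrium alpha beta gamma eps mu eta etaD V2 S2 D2 <->
  (in_U V2 S2 D2 /\
   (* (i) *)
   gamma < beta /\ D2 = alpha * mu / (beta - gamma) /\ D2 < sg / etaD /\
   (* (ii) *)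
   0 < m /\ 0 < V2 /\ V2 < sg /\ V2 ^ 2 + M * V2 + m = 0 /\
   0 <= M ^ 2 - 4 * m /\
   (V2 = (- M + sqrt (M ^ 2 - 4 * m)) / 2 \/ V2 = (- M - sqrt (M ^ 2 - 4 * m)) / 2) /\
   (* (iii) *)
   0 < S2 /\ S2 < 1 /\ S2 = 1 - V2 - D2 - eps / (beta * V2)).
Proof.
  intros sg M m.
  assert (Ham : 0 < alpha * (1 - mu)) by (apply Rmult_lt_0_compat; lra).
  assert (Hbv : 0 < beta * V2) by (apply Rmult_lt_0_compat; lra).
  assert (Hm : 0 < m).
  { unfold m, mcoef. apply Rdiv_lt_0_compat. nra. apply Rmult_lt_0_compat; lra. }
  assert (HMdef : M * (eta - 1) = sg - (etaD - eta) * D2 - eta).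
  { unfold M, Mcoef. fold sg. clearbody sg. field. lra. }
  assert (Hmdef : m * (beta * (eta - 1)) = eta * eps).
  { unfold m, mcoef. field. lra. }
  clearbody M m.
  assert (Hsg : sg + eps / (alpha * (1 - mu)) = 1).
  { unfold sg, sigmaVSD. ring. }
  assert (Hk : eps / (alpha * (1 - mu)) * (alpha * (1 - mu)) = eps).
  { field. lra. }
  assert (Hq : eps / (beta * V2) * (beta * V2) = eps).
  { field. lra. }
  assert (Hqp : 0 < eps / (beta * V2)) by (apply Rdiv_lt_0_compat; lra).
  set (k := eps / (alpha * (1 - mu))) in *.
  set (q := eps / (beta * V2)) in *.
  unfold is_equilibrium, fV, fS, fD, Omega, theta, in_U.
  split.
  - intros [H1 [H2 H3]].
    assert (HO : 1 - V2 - eta * S2 - etaD * D2 = k).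
    { apply (Rmult_eq_reg_r (alpha * (1 - mu) * V2)); [|nra]. nra. }
    assert (HT : 1 - V2 - S2 - D2 = q).
    { apply (Rmult_eq_reg_r (beta * V2 * S2)); [|nra]. nra. }
    assert (HDb : D2 * (beta - gamma) = alpha * mu).
    { apply (Rmult_eq_reg_r eps); [|lra].
      assert (E : (alpha * mu + gamma * D2) * (V2 * q) = eps * D2).
      { rewrite HT in H3. lra. }
      assert (E2 : V2 * q * beta = eps) by (rewrite <- Hq; ring).
      assert (E3 : (alpha * mu + gamma * D2) * (V2 * q * beta) = eps * D2 * beta)
        by (rewrite <- E; ring).
      rewrite E2 in E3. lra. }
    assert (Hgb : gamma < beta).
    { destruct (Rle_lt_dec beta gamma); [|auto]. nra. }
    assert (Hquad : V2 ^ 2 + M * V2 + m = 0).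
    { apply (Rmult_eq_reg_r (beta * (eta - 1))); [|nra].
      rewrite Rmult_0_l.
      assert (E : (V2 ^ 2 + M * V2 + m) * (beta * (eta - 1))
                = beta * V2 ^ 2 * (eta - 1) + beta * V2 * (M * (eta - 1)) + m * (beta * (eta - 1))) by ring.
      rewrite E, HMdef, Hmdef. clear E.
      replace sg with (V2 + eta * S2 + etaD * D2) by lra.
      replace S2 with (1 - V2 - D2 - q) by lra.
      assert (E2 : V2 * q * beta = eps) by (rewrite <- Hq; ring).
      rewrite <- E2. ring. }
    assert (Hdisc : M ^ 2 - 4 * m = (2 * V2 + M) ^ 2) by nra.
    assert (0 < eta * S2) by (apply Rmult_lt_0_compat; lra).
    assert (0 < etaD * D2) by (apply Rmult_lt_0_compat; lra).
    repeat split; try lra.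
    + apply (Rmult_eq_reg_r (beta - gamma)); [|lra]. rewrite HDb. field. lra.
    + apply (Rmult_lt_reg_r etaD); [lra|]. unfold Rdiv. rewrite Rmult_assoc, Rinv_l by lra. nra.
    + rewrite Hdisc. apply pow2_ge_0.
    + rewrite Hdisc, sqrt_sq_abs. unfold Rabs. destruct (Rcase_abs (2 * V2 + M)).
      * right. lra.
      * left. lra.
  - intros [[_ [_ [_ Hsum]]] [Hgb [HD [HDs [_ [_ [HVs [Hquad [_ [_ [_ [_ HS]]]]]]]]]]]].
    assert (HT : 1 - V2 - S2 - D2 = q) by lra.
    assert (HDb : D2 * (beta - gamma) = alpha * mu).
    { rewrite HD. field. lra. }
    assert (HO : V2 + eta * S2 + etaD * D2 = sg).
    { apply (Rmult_eq_reg_r (V2 * (eta - 1) * beta)); [|nra].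
      assert (E : (V2 ^ 2 + M * V2 + m) * (beta * (eta - 1))
                = beta * V2 ^ 2 * (eta - 1) + beta * V2 * (M * (eta - 1)) + m * (beta * (eta - 1))) by ring.
      rewrite HMdef, Hmdef, Hquad in E.
      assert (E2 : V2 * q * beta = eps) by (rewrite <- Hq; ring).
      rewrite <- E2 in E.
      replace S2 with (1 - V2 - D2 - q) by lra.
      apply Rminus_diag_uniq.
      replace ((V2 + eta * (1 - V2 - D2 - q) + etaD * D2) * (V2 * (eta - 1) * beta) -
                sg * (V2 * (eta - 1) * beta))
        with (- (eta - 1) * (beta * V2 ^ 2 * (eta - 1) + beta * V2 * (sg - (etaD - eta) * D2 - eta) +
                eta * (V2 * q * beta))) by ring.
      rewrite <- E. ring. }
    rewrite HT.
    repeat split.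
    + replace (1 - V2 - eta * S2 - etaD * D2) with k by lra.
      replace (alpha * (1 - mu) * V2 * k - eps * V2) with (V2 * (k * (alpha * (1 - mu))) - eps * V2) by ring.
      rewrite Hk. ring.
    + replace (beta * V2 * S2 * q - eps * S2) with (S2 * (q * (beta * V2)) - eps * S2) by ring.
      rewrite Hq. ring.
    + replace (alpha * mu + gamma * D2) with (beta * D2)
        by (rewrite <- HDb; ring).
      replace (beta * D2 * V2 * q - eps * D2) with (D2 * (q * (beta * V2)) - eps * D2) by ring.
      rewrite Hq. ring.
Qed.
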